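(* Let $(\alpha_j)_{j\in\mathbb N}$, $(\beta_j)_{j\in\mathbb N}$, $(\sigma_j)_{j\in\mathbb N}$ be real sequences with $$\alpha_j\ge 0,\qquad 1\ge\beta_1\ge\beta_2\ge\cdots>0,\qquad 1<\sigma_1\le\sigma_2\le\cdots,$$ and let $\mathcal B=\{\mathcal B_d\}_{d\in\mathbb N}$ be the associated sequence of additive random fields with Korobov-kernel marginals (see context). Then: (i) the problem $\mathcal B$ is polynomially tractable both for the absolute error criterion (ABS) and for the normalized error criterion (NOR); (ii) the problem $\mathcal B$ is strongly polynomially tractable for ABS if and only if $$A_*:=\liminf_{d\to\infty}\frac{\ln(1/\beta_d)}{\ln d}>1,$$ and in that case the exponent of strong polynomial tractability (for ABS) is $$p^{\rm str-avg}=\max\Big\{\frac{2}{A_*-1},\frac{2}{\sigma_1-1}\Big\}.$$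
   Context: For $\alpha\ge0$, $\beta>0$, $\sigma>1$, let $B_{\alpha,\beta,\sigma}(x)$, $x\in[0,1]$, be a zero-mean random process with covariance function $\kappa_{\alpha,\beta,\sigma}(x,y)=\alpha+2\beta\sum_{k=1}^\infty k^{-\sigma}\cos(2\pi k(x-y))$. Let $B_j$, $j\in\mathbb N$, be independent zero-mean random processes on $[0,1]$ with covariance functions $\kappa_{\alpha_j,\beta_j,\sigma_j}$, and for $d\in\mathbb N$ let $\mathcal B_d(\mathbf x)=\sum_{j=1}^d B_j(x_j)$, $\mathbf x=(x_1,\dots,x_d)\in[0,1]^d$, a zero-mean random field with covariance $\kappa^{\mathcal B_d}(\mathbf x,\mathbf y)=\sum_{j=1}^d\kappa_{\alpha_j,\beta_j,\sigma_j}(x_j,y_j)$, viewed as a random element of $L_2([0,1]^d)$ with norm $\|\cdot\|_{2,d}$ and inner product $(\cdot,\cdot)_{2,d}$. The $n$th minimal average case error is $e^{\mathcal B_d}(n)=\inf\{(\mathbb E\|\mathcal B_d-\sum_{m=1}^n(\mathcal B_d,\varphi_m)_{2,d}\psi_m\|_{2,d}^2)^{1/2}:\varphi_m,\psi_m\in L_2([0,1]^d)\}$ and $e^{\mathcal B_d}(0)=(\mathbb E\|\mathcal B_d\|_{2,d}^2)^{1/2}$. (Equivalently, if $\lambda_{d,1}\ge\lambda_{d,2}\ge\cdots$ are the eigenvalues of the covariance operator $f\mapsto\int_{[0,1]^d}\kappa^{\mathcal B_d}(\cdot,\mathbf y)f(\mathbf y)\,d\mathbf y$ on $L_2([0,1]^d)$,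 namely the number $\sum_{j=1}^d\alpha_j$ together with the numbers $\beta_j k^{-\sigma_j}$, $k\in\mathbb N$, $j=1,\dots,d$, each taken twice, then $e^{\mathcal B_d}(n)^2=\sum_{j>n}\lambda_{d,j}$.) For $\varepsilon\in(0,1)$ and $Z\in\{\mathrm{ABS},\mathrm{NOR}\}$, the information complexity is $n^{\mathcal B_d,Z}(\varepsilon)=\min\{n\in\mathbb N: e^{\mathcal B_d}(n)\le\varepsilon\,\mathrm{CRI}_d\}$, where $\mathrm{CRI}_d=1$ for ABS and $\mathrm{CRI}_d=e^{\mathcal B_d}(0)$ for NOR. The problem is polynomially tractable (PT) for $Z$ if there are $C,p,q\ge0$ with $n^{\mathcal B_d,Z}(\varepsilon)\le C d^q\varepsilon^{-p}$ for all $d\in\mathbb N$, $\varepsilon\in(0,1)$; strongly polynomially tractable (SPT) if this holds with $q=0$; the exponent of SPT $p^{\rm str-avg}$ is the infimum of all $p$ for which such a bound with $q=0$ holds (for some $C$). Convention: $2/(A_*-1)=0$ if $A_*=\infty$. *)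

(* Defs.v *)
From Stdlib Require Import Reals List Arith Bool.
From Coquelicot Require Import Coquelicot.
Open Scope R_scope.

(* Sequences are indexed from 1: alpha 1, alpha 2, ... (value at 0 unused). *)

Definition sum1 (f : nat -> R) (d : nat) : R :=
  fold_right Rplus 0 (map f (List.seq 1 d)).

(* Index set for the eigenvalues of the covariance operator of B_d:
   None           ~ the eigenvalue sum_{j=1}^d alpha_j
   Some (j,k,b)   ~ the eigenvalue beta_j k^{-sigma_j} (copy b in {true,false},
                    i.e. each taken twice), for 1 <= j <= d, k >= 1;
                    other indices carry the value 0 (harmless padding). *)
Definition idx := option (nat * nat * bool).

Definition eigval (alpha beta sigma : nat -> R) (d : nat) (i : idx) : R :=
  match i with
  | None => sum1 alpha d
  | Some (j, k, _) =>
      if (1 <=? j)%nat && (j <=? d)%nat && (1 <=? k)%nat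
      then beta j * Rpower (INR k) (- sigma j) else 0
  end.

(* Trace of the covariance operator = E ||B_d||^2 = e(0)^2 :
   sum_j alpha_j + 2 sum_j beta_j sum_{k>=1} k^{-sigma_j}. *)
Definition trace_cov (alpha beta sigma : nat -> R) (d : nat) : R :=
  sum1 alpha d
  + 2 * sum1 (fun j => beta j * Series (fun k => Rpower (INR (S k)) (- sigma j))) d.

(* Sum of the n largest eigenvalues: sup over at most n distinct indices. *)
Definition top_sum (alpha beta sigma : nat -> R) (d n : nat) : R :=
  real (Lub_Rbar (fun x => exists S : list idx,
          NoDup S /\ (length S <= n)%nat /\
          x = fold_right Rplus 0 (map (eigval alpha beta sigma d) S))).

(* n-th minimal average case error: e(n)^2 = sum_{j>n} lambda_{d,j}. *)
Definition err (alpha beta sigma : nat -> R) (d n : nat) : R :=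
  sqrt (trace_cov alpha beta sigma d - top_sum alpha beta sigma d n).

Inductive crit := ABS | NOR.

Definition CRI (alpha beta sigma : nat -> R) (Z : crit) (d : nat) : R :=
  match Z with ABS => 1 | NOR => err alpha beta sigma d 0 end.

(* n^{B_d,Z}(eps) <= bound  (n^{B_d,Z}(eps) = min{n : e(n) <= eps CRI_d}). *)
Definition info_le (alpha beta sigma : nat -> R) (Z : crit) (d : nat) (eps bound : R) : Prop :=
  exists n : nat, INR n <= bound /\ err alpha beta sigma d n <= eps * CRI alpha beta sigma Z d.

Definition PT (alpha beta sigma : nat -> R) (Z : crit) : Prop :=
  exists C p q : R, 0 <= C /\ 0 <= p /\ 0 <= q /\
    forall (d : nat) (eps : R), (1 <= d)%nat -> 0 < eps < 1 ->
      info_le alpha beta sigma Z d eps (C * Rpower (INR d) q * Rpower eps (- p)).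

Definition SPT_with (alpha beta sigma : nat -> R) (Z : crit) (p : R) : Prop :=
  exists C : R, 0 <= C /\
    forall (d : nat) (eps : R), (1 <= d)%nat -> 0 < eps < 1 ->
      info_le alpha beta sigma Z d eps (C * Rpower eps (- p)).

Definition SPT (alpha beta sigma : nat -> R) (Z : crit) : Prop :=
  exists p : R, 0 <= p /\ SPT_with alpha beta sigma Z p.

Definition is_SPT_exponent (alpha beta sigma : nat -> R) (Z : crit) (pstar : R) : Prop :=
  (forall p, 0 <= p -> SPT_with alpha beta sigma Z p -> pstar <= p) /\
  (forall x, pstar < x -> exists p, 0 <= p /\ SPT_with alpha beta sigma Z p /\ p < x).

Definition A_star (beta : nat -> R) : Rbar :=
  LimInf_seq (fun d => ln (1 / beta d) / ln (INR d)).

(* 2/(A_*-1), with the convention 2/(A_*-1) = 0 if A_* = +oo *)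
Definition two_over (A : Rbar) : R :=
  match A with Finite a => 2 / (a - 1) | _ => 0 end.

(* Main.v *)
Require Import Defs.
From Stdlib Require Import Reals.
From Coquelicot Require Import Coquelicot.
From Stdlib Require Import Reals List Lra Lia ZArith Arith Bool.
From Coquelicot Require Import Coquelicot.
Open Scope R_scope.

Definition sumR (l : list R) := fold_right Rplus 0 l.

Lemma sumR_app l1 l2 : sumR (l1 ++ l2) = sumR l1 + sumR l2.
Proof. induction l1 as [|a l IH]; unfold sumR in *; simpl; [ring| rewrite IH; ring]. Qed.

Lemma sumR_le {A} (f g : A -> R) l :
  (forall x, In x l -> f x <= g x) -> sumR (map f l) <= sumR (map g l).
Proof.
  induction l as [|a l IH]; intros H; unfold sumR in *; simpl; [lra|].
  apply Rplus_le_compat; [apply H; now left| apply IH; intros; apply H; now right].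
Qed.

Lemma sumR_nonneg {A} (f : A -> R) l :
  (forall x, In x l -> 0 <= f x) -> 0 <= sumR (map f l).
Proof.
  induction l as [|a l IH]; intros H; unfold sumR in *; simpl; [lra|].
  assert (0 <= f a) by (apply H; now left).
  assert (0 <= fold_right Rplus 0 (map f l)) by (apply IH; intros; apply H; now right).
  lra.
Qed.

Lemma sumR_plus {A} (f g : A -> R) l :
  sumR (map (fun x => f x + g x) l) = sumR (map f l) + sumR (map g l).
Proof. induction l as [|a l IH]; unfold sumR in *; simpl; [ring| rewrite IH; ring]. Qed.

Lemma sumR_scal {A} c (f : A -> R) l :
  sumR (map (fun x => c * f x) l) = c * sumR (map f l).
Proof. induction l as [|a l IH]; unfold sumR in *; simpl; [ring| rewrite IH; ring]. Qed.

Lemma sumR_ext {A} (f g : A -> R) l :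
  (forall x, In x l -> f x = g x) -> sumR (map f l) = sumR (map g l).
Proof. intros H; f_equal; apply map_ext_in; auto. Qed.

Lemma sumR_const {A} c (l : list A) : sumR (map (fun _ => c) l) = INR (length l) * c.
Proof.
  induction l as [|a l IH]; [unfold sumR; simpl; ring|].
  change (length (a :: l)) with (S (length l)). rewrite S_INR.
  unfold sumR in *. cbn [map fold_right]. rewrite IH; ring.
Qed.

Lemma sumR_ge_const {A} (f : A -> R) c l :
  (forall x, In x l -> c <= f x) -> INR (length l) * c <= sumR (map f l).
Proof. intros H; rewrite <- sumR_const; apply sumR_le; auto. Qed.

Lemma sumR_flat_map {A B} (g : B -> R) (f : A -> list B) l :
  sumR (map g (flat_map f l)) = sumR (map (fun x => sumR (map g (f x))) l).
Proof.
  induction l as [|a l IH]; simpl; [reflexivity|].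
  rewrite map_app, sumR_app, IH. reflexivity.
Qed.

Lemma length_flat_map_INR {A B} (f : A -> list B) l :
  INR (length (flat_map f l)) = sumR (map (fun x => INR (length (f x))) l).
Proof.
  induction l as [|a l IH]; simpl; [reflexivity|].
  rewrite length_app, plus_INR, IH. reflexivity.
Qed.

Lemma sum_f_R0_seq a N : sum_f_R0 a N = sumR (map a (seq 0 (S N))).
Proof.
  induction N as [|N IH]; [unfold sumR; simpl; ring|].
  change (sum_f_R0 a (S N)) with (sum_f_R0 a N + a (S N)).
  rewrite IH. rewrite (seq_S (S N) 0). rewrite map_app, sumR_app.
  unfold sumR at 3; simpl. ring.
Qed.

Lemma sumR_remove {A} dec (g : A -> R) a L :
  (forall x, 0 <= g x) -> sumR (map g (remove dec a L)) <= sumR (map g L).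
Proof.
  intros Hg; induction L as [|b L IH]; simpl; [lra|].
  destruct (dec a b).
  - unfold sumR at 2; simpl. fold (sumR (map g L)). specialize (Hg b). lra.
  - simpl. unfold sumR in *; simpl. lra.
Qed.

Lemma sumR_remove_in {A} dec (g : A -> R) a L :
  (forall x, 0 <= g x) -> In a L ->
  g a + sumR (map g (remove dec a L)) <= sumR (map g L).
Proof.
  intros Hg; induction L as [|b L IH]; simpl; [tauto|]. intros Hin.
  destruct (dec a b) as [e|n].
  - subst b. unfold sumR at 2; simpl. fold (sumR (map g L)).
    pose proof (sumR_remove dec g a L Hg). lra.
  - destruct Hin as [e|Hin]; [congruence|]. simpl. unfold sumR in *; simpl.
    specialize (IH Hin). lra.
Qed.

Lemma sumR_NoDup_incl {A} (dec : forall x y : A, {x=y}+{x<>y}) (g : A -> R) (S L : list A) :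
  NoDup S -> (forall x, 0 <= g x) -> (forall x, In x S -> g x <> 0 -> In x L) ->
  sumR (map g S) <= sumR (map g L).
Proof.
  intros HS Hg; revert L; induction HS as [|a S Ha HS IH]; intros L HL.
  - simpl. apply sumR_nonneg; auto.
  - simpl. unfold sumR at 1; simpl; fold (sumR (map g S)).
    destruct (Req_dec (g a) 0) as [e|n].
    + rewrite e. rewrite Rplus_0_l. apply IH. intros; apply HL; auto; now right.
    + assert (Hin : In a L) by (apply HL; [now left| exact n]).
      pose proof (sumR_remove_in dec g a L Hg Hin).
      assert (sumR (map g S) <= sumR (map g (remove dec a L))).
      { apply IH. intros x Hx Hgx. apply in_in_remove.
        - intro; subst; contradiction.
        - apply HL; auto; now right. }
      lra.
Qed.

Lemma NoDup_flat_map' {A B} (f : A -> list B) l :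
  NoDup l -> (forall x, In x l -> NoDup (f x)) ->
  (forall x y z, In x l -> In y l -> In z (f x) -> In z (f y) -> x = y) ->
  NoDup (flat_map f l).
Proof.
  induction l as [|a l IH]; intros Hl Hf Hd; simpl; [constructor|].
  inversion Hl; subst.
  apply NoDup_app.
  - apply Hf; now left.
  - apply IH; auto. intros; apply Hf; now right.
    intros x y z Hx Hy; apply Hd; now right.
  - intros z Hz Hz'. apply in_flat_map in Hz' as [x [Hx Hzx]].
    assert (a = x) by (apply (Hd a x z); auto; [now left| now right]).
    subst; contradiction.
Qed.

Lemma exp_le_mono x y : x <= y -> exp x <= exp y.
Proof. intros [H|H]; [left; apply exp_increasing; auto| subst; lra]. Qed.

Lemma Rpower_1_base y : Rpower 1 y = 1.
Proof. unfold Rpower. rewrite ln_1, Rmult_0_r, exp_0. reflexivity. Qed.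

Lemma Rpower_pos x y : 0 < Rpower x y.
Proof. unfold Rpower; apply exp_pos. Qed.

Lemma Rpower_le_neg a b s : 0 < a <= b -> 0 <= s -> Rpower b (- s) <= Rpower a (- s).
Proof.
  intros Hab Hs. rewrite !Rpower_Ropp. apply Rinv_le_contravar.
  apply Rpower_pos. apply Rle_Rpower_l; auto.
Qed.

Lemma Rpower_small_base r a b : 0 < r <= 1 -> a <= b -> Rpower r b <= Rpower r a.
Proof.
  intros Hr Hab. unfold Rpower. apply exp_le_mono.
  assert (ln r <= 0). { rewrite <- ln_1. apply ln_le; lra. }
  nra.
Qed.

Lemma Rpower_ge1 e q : 1 <= e -> 0 <= q -> 1 <= Rpower e q.
Proof.
  intros He Hq. rewrite <- (Rpower_O e) by lra. apply Rle_Rpower; auto.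
Qed.

Lemma Rpower_eps_ge1 eps p : 0 < eps <= 1 -> 0 <= p -> 1 <= Rpower eps (- p).
Proof.
  intros He Hp. rewrite <- (Rpower_O eps) by lra. apply Rpower_small_base; lra.
Qed.

Lemma Rpower_inv_base t y : 0 < t -> Rpower (/ t) y = Rpower t (- y).
Proof. intros Ht. unfold Rpower. rewrite ln_Rinv by auto. f_equal; ring. Qed.

Lemma ln_Rpower x y : ln (Rpower x y) = y * ln x.
Proof. unfold Rpower. apply ln_exp. Qed.

Lemma Rpower_sqr e : 0 < e -> Rpower e 2 = e ^ 2.
Proof. intros He. replace 2 with (INR 2) by (simpl; ring). apply Rpower_pow; auto. Qed.

Definition nfl (x : R) : nat := Z.to_nat (Int_part x).

Lemma nfl_spec x : 0 <= x -> INR (nfl x) <= x < INR (nfl x) + 1.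
Proof.
  intros Hx. destruct (base_Int_part x) as [H1 H2].
  assert (Hz : (0 <= Int_part x)%Z).
  { assert (-1 < IZR (Int_part x)) by lra.
    apply lt_IZR in H. lia. }
  unfold nfl. rewrite INR_IZR_INZ, Z2Nat.id by exact Hz. lra.
Qed.

Lemma nat_large X : exists N : nat, X <= INR N.
Proof.
  exists (S (nfl (Rabs X))). destruct (nfl_spec (Rabs X) (Rabs_pos X)).
  rewrite S_INR. pose proof (Rle_abs X). lra.
Qed.

Lemma key_ineq s x : 1 < s -> 2 <= x ->
  (s - 1) * Rpower x (- s) <= Rpower (x - 1) (1 - s) - Rpower x (1 - s).
Proof.
  intros Hs Hx.
  assert (Hx1 : 0 < 1 - / x) by (assert (/ x <= /2) by (apply Rinv_le_contravar; lra); lra).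
  assert (Heq : x - 1 = x * (1 - / x)) by (field; lra).
  unfold Rpower. rewrite Heq, ln_mult by lra.
  set (L := ln x). set (M := ln (1 - / x)).
  assert (HM : M <= - / x).
  { pose proof (exp_ineq1_le M). unfold M at 2 in H. rewrite exp_ln in H by auto. lra. }
  assert (E1 : exp ((1 - s) * (L + M)) = exp (- s * L) * x * exp ((1 - s) * M)).
  { replace ((1 - s) * (L + M)) with (- s * L + L + (1 - s) * M) by ring.
    rewrite !exp_plus. unfold L; rewrite exp_ln by lra. ring. }
  assert (E2 : exp ((1 - s) * L) = exp (- s * L) * x).
  { replace ((1 - s) * L) with (- s * L + L) by ring. rewrite exp_plus. unfold L; rewrite exp_ln by lra. ring. }
  rewrite E1, E2.
  pose proof (exp_ineq1_le ((1 - s) * M)).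
  assert (Hp : 0 < exp (- s * L)) by apply exp_pos.
  assert (Hxm : x * ((1 - s) * M) >= s - 1).
  { assert ((1 - s) * M >= (s - 1) * / x) by nra.
    assert (x * ((s - 1) * / x) = s - 1) by (field; lra). nra. }
  assert (HF : x * exp ((1 - s) * M) >= x + (s - 1)) by nra.
  set (E := exp (- s * L)) in *. set (F := exp ((1 - s) * M)) in *.
  assert (E * (x * F) >= E * (x + (s - 1))) by (apply Rle_ge, Rmult_le_compat_l; lra).
  nra.
Qed.
Definition Pz (s : R) (N : nat) : R := sumR (map (fun k => Rpower (INR k) (- s)) (seq 1 N)).

Lemma Pz_S s N : Pz s (S N) = Pz s N + Rpower (INR (S N)) (- s).
Proof.
  unfold Pz. rewrite seq_S, map_app, sumR_app. unfold sumR; cbn [map fold_right].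
  replace (1 + N)%nat with (S N) by lia. ring.
Qed.

Lemma Pz_mono s N M : (N <= M)%nat -> Pz s N <= Pz s M.
Proof.
  intros H; induction H; [lra|]. rewrite Pz_S. pose proof (Rpower_pos (INR (S m)) (-s)). lra.
Qed.

Lemma Pz_1 s : Pz s 1 = 1.
Proof. unfold Pz; simpl. unfold sumR; simpl. rewrite Rpower_1_base. ring. Qed.

Lemma tele s M N : 1 < s -> (1 <= M)%nat -> (M <= N)%nat ->
  Pz s N - Pz s M <= (Rpower (INR M) (1 - s) - Rpower (INR N) (1 - s)) / (s - 1).
Proof.
  intros Hs HM HMN. induction HMN as [|N HMN IH].
  - replace (_ - _) with 0 by ring. unfold Rdiv. rewrite Rminus_diag, Rmult_0_l. lra.
  - rewrite Pz_S.
    assert (H2 : 2 <= INR (S N)).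
    { replace 2 with (INR 2) by (simpl; ring). apply le_INR. lia. }
    pose proof (key_ineq s (INR (S N)) Hs H2) as K.
    replace (INR (S N) - 1) with (INR N) in K by (rewrite S_INR; ring).
    assert (Hd : 0 < s - 1) by lra.
    apply (Rmult_le_reg_r (s - 1)); auto.
    unfold Rdiv. rewrite Rmult_assoc, Rinv_l by lra. rewrite Rmult_1_r.
    unfold Rdiv in IH.
    assert ((Pz s N - Pz s M) * (s - 1) <= (Rpower (INR M) (1 - s) - Rpower (INR N) (1 - s))).
    { apply (Rmult_le_compat_r (s - 1)) in IH; [|lra].
      rewrite Rmult_assoc, Rinv_l in IH by lra. lra. }
    nra.
Qed.

Lemma Pz_bound s N : 1 < s -> Pz s N <= s / (s - 1).
Proof.
  intros Hs. assert (Hd : 0 < s - 1) by lra.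
  destruct N as [|N].
  - unfold Pz; simpl; unfold sumR; simpl. apply Rlt_le, Rdiv_lt_0_compat; lra.
  - pose proof (tele s 1 (S N) Hs (le_n 1) ltac:(lia)) as T.
    rewrite Pz_1 in T. simpl INR in T at 1. rewrite Rpower_1_base in T.
    pose proof (Rpower_pos (INR (S N)) (1 - s)).
    assert ((1 - Rpower (INR (S N)) (1 - s)) / (s - 1) <= 1 / (s - 1)).
    { unfold Rdiv; apply Rmult_le_compat_r; [apply Rlt_le, Rinv_0_lt_compat; lra| lra]. }
    assert (s / (s - 1) = 1 + 1 / (s - 1)) by (field; lra). lra.
Qed.

Lemma Pz_tail s m N : 1 < s ->
  Pz s N - Pz s m <= s / (s - 1) * Rpower (INR (S m)) (1 - s).
Proof.
  intros Hs. assert (Hd : 0 < s - 1) by lra.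
  pose proof (Rpower_pos (INR (S m)) (1 - s)) as Hp.
  assert (0 <= s / (s - 1) * Rpower (INR (S m)) (1 - s)).
  { apply Rmult_le_pos; [apply Rlt_le, Rdiv_lt_0_compat; lra| lra]. }
  destruct (le_lt_dec N m) as [HH|HH].
  - pose proof (Pz_mono s N m HH). lra.
  - pose proof (tele s (S m) N Hs ltac:(lia) HH) as T.
    rewrite Pz_S in T.
    pose proof (Rpower_pos (INR N) (1 - s)).
    assert (T2 : (Rpower (INR (S m)) (1 - s) - Rpower (INR N) (1 - s)) / (s - 1)
                 <= Rpower (INR (S m)) (1 - s) / (s - 1)).
    { unfold Rdiv; apply Rmult_le_compat_r; [apply Rlt_le, Rinv_0_lt_compat; lra| lra]. }
    assert (T3 : Rpower (INR (S m)) (- s) <= Rpower (INR (S m)) (1 - s)).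
    { apply Rle_Rpower; [|lra]. replace 1 with (INR 1) by reflexivity. apply le_INR; lia. }
    assert (E : s / (s - 1) * Rpower (INR (S m)) (1 - s) =
                Rpower (INR (S m)) (1 - s) / (s - 1) + Rpower (INR (S m)) (1 - s)) by (field; lra).
    lra.
Qed.

Definition zeta (s : R) : R := Series (fun k => Rpower (INR (S k)) (- s)).

Lemma series_of_bounded (a : nat -> R) M :
  (forall k, 0 <= a k) -> (forall N, sum_f_R0 a N <= M) ->
  (forall N, sum_f_R0 a N <= Series a) /\ Series a <= M.
Proof.
  intros Ha HM.
  assert (Hg : Un_growing (sum_f_R0 a)).
  { intro n. simpl. specialize (Ha (S n)). lra. }
  assert (Hb : has_ub (sum_f_R0 a)).
  { exists M. intros x [i ->]. apply HM. }
  destruct (growing_cv _ Hg Hb) as [l Hl].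
  assert (Hs : Series a = l).
  { apply is_series_unique. apply is_series_Reals. exact Hl. }
  rewrite Hs. split.
  - apply growing_ineq; auto.
  - apply Rle_cv_lim with (Un := sum_f_R0 a) (Vn := fun _ => M); auto.
    intros eps He. exists 0%nat. intros. unfold R_dist. rewrite Rminus_diag, Rabs_R0. auto.
Qed.

Lemma sum_f_Pz s N : sum_f_R0 (fun k => Rpower (INR (S k)) (- s)) N = Pz s (S N).
Proof.
  rewrite sum_f_R0_seq. unfold Pz. rewrite <- seq_shift, map_map. reflexivity.
Qed.

Lemma zeta_facts s : 1 < s ->
  (forall N, Pz s N <= zeta s) /\ zeta s <= s / (s - 1) /\ 1 <= zeta s /\
  (forall m, zeta s - Pz s m <= s / (s - 1) * Rpower (INR (S m)) (1 - s)).
Proof.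
  intros Hs.
  assert (Ha : forall k, 0 <= Rpower (INR (S k)) (- s)) by (intros; apply Rlt_le, Rpower_pos).
  destruct (series_of_bounded _ (s / (s - 1)) Ha) as [H1 H2].
  { intros N; rewrite sum_f_Pz; apply Pz_bound; auto. }
  assert (HP : forall N, Pz s N <= zeta s).
  { intros [|N]. - unfold Pz; simpl; unfold sumR; simpl.
      pose proof (H1 0%nat) as H0.
      assert (0 <= sum_f_R0 (fun k => Rpower (INR (S k)) (- s)) 0) by apply Ha.
      unfold zeta; lra.
    - rewrite <- sum_f_Pz. apply H1. }
  split; [exact HP|]. split; [exact H2|]. split; [rewrite <- (Pz_1 s); apply HP|].
  intros m.
  destruct (series_of_bounded _ (Pz s m + s / (s - 1) * Rpower (INR (S m)) (1 - s)) Ha) as [_ H3].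
  { intros N; rewrite sum_f_Pz. pose proof (Pz_tail s m (S N) Hs). lra. }
  unfold zeta. lra.
Qed.
Definition idx_eq_dec : forall x y : idx, {x = y} + {x <> y}.
Proof. repeat decide equality. Defined.

Definition pairs (j k : nat) : list idx := Some (j, k, true) :: Some (j, k, false) :: nil.
Definition sel (d : nat) (m : nat -> nat) : list idx :=
  None :: flat_map (fun j => flat_map (pairs j) (seq 1 (m j))) (seq 1 d).

Lemma sel_NoDup d m : NoDup (sel d m).
Proof.
  unfold sel. constructor.
  - intros H. apply in_flat_map in H as [j [_ H]]. apply in_flat_map in H as [k [_ H]].
    unfold pairs in H; simpl in H; intuition discriminate.
  - apply NoDup_flat_map'.
    + apply seq_NoDup.
    + intros j _. apply NoDup_flat_map'.
      * apply seq_NoDup.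
      * intros k _. unfold pairs. constructor; [simpl; intuition discriminate|].
        constructor; [simpl; tauto| constructor].
      * intros k1 k2 z _ _ H1 H2. unfold pairs in *; simpl in *.
        intuition (subst; try congruence).
    + intros j1 j2 z _ _ H1 H2.
      apply in_flat_map in H1 as [k1 [_ H1]]. apply in_flat_map in H2 as [k2 [_ H2]].
      unfold pairs in *; simpl in *. intuition (subst; try congruence).
Qed.

Lemma sel_len d m : INR (length (sel d m)) = 1 + 2 * sumR (map (fun j => INR (m j)) (seq 1 d)).
Proof.
  unfold sel. change (length (None :: ?l)) with (S (length l)). rewrite S_INR.
  rewrite length_flat_map_INR. rewrite <- sumR_scal.
  rewrite (sumR_ext _ (fun j => 2 * INR (m j))). ring.
  intros j _. rewrite length_flat_map_INR.
  rewrite (sumR_ext _ (fun _ => 2)) by (intros; reflexivity).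
  rewrite sumR_const, length_seq. ring.
Qed.

Section Main.
Variables alpha beta sigma : nat -> R.
Hypothesis Halpha : forall j, (1 <= j)%nat -> 0 <= alpha j.
Hypothesis Hbeta1 : beta 1%nat <= 1.
Hypothesis Hbeta_mono : forall j, (1 <= j)%nat -> beta (S j) <= beta j.
Hypothesis Hbeta_pos : forall j, (1 <= j)%nat -> 0 < beta j.
Hypothesis Hsigma1 : 1 < sigma 1%nat.
Hypothesis Hsigma_mono : forall j, (1 <= j)%nat -> sigma j <= sigma (S j).

Local Notation ev d := (eigval alpha beta sigma d).
Local Notation tr d := (trace_cov alpha beta sigma d).

Lemma sigma_ge j : (1 <= j)%nat -> sigma 1%nat <= sigma j.
Proof.
  intros H; induction H; [lra|]. pose proof (Hsigma_mono m ltac:(lia)). lra.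
Qed.

Lemma sigma_gt1 j : (1 <= j)%nat -> 1 < sigma j.
Proof. intros H; pose proof (sigma_ge j H); lra. Qed.

Lemma beta_ge d j : (1 <= j)%nat -> (j <= d)%nat -> beta d <= beta j.
Proof.
  intros H1 H2; induction H2; [lra|]. pose proof (Hbeta_mono m ltac:(lia)). lra.
Qed.

Lemma beta_le1 j : (1 <= j)%nat -> beta j <= 1.
Proof. intros H; pose proof (beta_ge j 1 (le_n 1) H); lra. Qed.

Lemma sum1_alpha_nonneg d : 0 <= sum1 alpha d.
Proof.
  apply (sumR_nonneg alpha (seq 1 d)). intros j Hj. apply in_seq in Hj. apply Halpha; lia.
Qed.

Lemma ev_nonneg d i : 0 <= ev d i.
Proof.
  destruct i as [[[j k] b]|]; unfold eigval.
  - destruct ((1 <=? j)%nat && (j <=? d)%nat && (1 <=? k)%nat) eqn:E; [|lra].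
    apply andb_true_iff in E as [E E3]. apply andb_true_iff in E as [E1 E2].
    apply Nat.leb_le in E1. apply Rlt_le, Rmult_lt_0_compat; [apply Hbeta_pos; lia| apply Rpower_pos].
  - apply sum1_alpha_nonneg.
Qed.

Lemma ev_some d j k b : (1 <= j)%nat -> (j <= d)%nat -> (1 <= k)%nat ->
  ev d (Some (j, k, b)) = beta j * Rpower (INR k) (- sigma j).
Proof.
  intros H1 H2 H3. unfold eigval.
  replace ((1 <=? j)%nat) with true by (symmetry; apply Nat.leb_le; lia).
  replace ((j <=? d)%nat) with true by (symmetry; apply Nat.leb_le; lia).
  replace ((1 <=? k)%nat) with true by (symmetry; apply Nat.leb_le; lia).
  reflexivity.
Qed.

Lemma sel_sum d m : sumR (map (ev d) (sel d m)) =
  sum1 alpha d + sumR (map (fun j => 2 * beta j * Pz (sigma j) (m j)) (seq 1 d)).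
Proof.
  unfold sel. cbn [map]. unfold sumR at 1. cbn [fold_right]. fold (sumR (map (ev d) (flat_map (fun j => flat_map (pairs j) (seq 1 (m j))) (seq 1 d)))).
  change (ev d None) with (sum1 alpha d). f_equal.
  rewrite sumR_flat_map. apply sumR_ext. intros j Hj. apply in_seq in Hj.
  rewrite sumR_flat_map. unfold Pz. rewrite <- sumR_scal. apply sumR_ext.
  intros k Hk. apply in_seq in Hk. unfold pairs. unfold sumR; cbn [map fold_right].
  rewrite !ev_some by lia. ring.
Qed.

Lemma trace_eq d : tr d = sum1 alpha d + sumR (map (fun j => 2 * beta j * zeta (sigma j)) (seq 1 d)).
Proof.
  unfold trace_cov. f_equal. unfold sum1. fold (sumR (map (fun j => beta j * zeta (sigma j)) (seq 1 d))).
  rewrite <- sumR_scal. apply sumR_ext. intros; unfold zeta; ring.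
Qed.

Definition kmax (S : list idx) : nat :=
  fold_right (fun i acc => match i with Some (_, k, _) => Nat.max k acc | None => acc end) 0%nat S.

Lemma kmax_spec S j k b : In (Some (j, k, b)) S -> (k <= kmax S)%nat.
Proof.
  induction S as [|a S IH]; simpl; [tauto|].
  intros [E|H].
  - subst a. lia.
  - specialize (IH H). destruct a as [[[j' k'] b']|]; lia.
Qed.

Lemma sum_le_trace d S : NoDup S -> sumR (map (ev d) S) <= tr d.
Proof.
  intros HS.
  apply Rle_trans with (sumR (map (ev d) (sel d (fun _ => kmax S)))).
  - apply (sumR_NoDup_incl idx_eq_dec); auto.
    + intros; apply ev_nonneg.
    + intros x Hx Hnz. destruct x as [[[j k] b]|]; [|left; reflexivity].
      unfold eigval in Hnz.
      destruct ((1 <=? j)%nat && (j <=? d)%nat && (1 <=? k)%nat) eqn:E; [|lra].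
      apply andb_true_iff in E as [E E3]. apply andb_true_iff in E as [E1 E2].
      apply Nat.leb_le in E1, E2, E3.
      right. apply in_flat_map. exists j. split; [apply in_seq; lia|].
      apply in_flat_map. exists k. split.
      * apply in_seq. pose proof (kmax_spec S j k b Hx). lia.
      * unfold pairs; destruct b; simpl; auto.
  - rewrite sel_sum, trace_eq. apply Rplus_le_compat_l. apply sumR_le.
    intros j Hj. apply in_seq in Hj.
    destruct (zeta_facts (sigma j) (sigma_gt1 j ltac:(lia))) as [HP _].
    pose proof (HP (kmax S)). pose proof (Hbeta_pos j ltac:(lia)). nra.
Qed.

Local Notation top d n := (top_sum alpha beta sigma d n).
Local Notation er d n := (err alpha beta sigma d n).

Lemma top_spec d n :
  (forall S, NoDup S -> (length S <= n)%nat -> sumR (map (ev d) S) <= top d n) /\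
  (forall B, (forall S, NoDup S -> (length S <= n)%nat -> sumR (map (ev d) S) <= B) -> top d n <= B).
Proof.
  unfold top_sum.
  set (E := fun x => exists S : list idx, NoDup S /\ (length S <= n)%nat /\
                      x = fold_right Rplus 0 (map (eigval alpha beta sigma d) S)).
  generalize (Lub_Rbar_correct E). destruct (Lub_Rbar E) as [r| |]; intros [Hub Hlub].
  - simpl. split.
    + intros S HS Hl. apply (Hub (sumR (map (ev d) S))). exists S; auto.
    + intros B HB. apply (Hlub (Finite B)). intros x [S [HS [Hl ->]]]. simpl. apply HB; auto.
  - exfalso. apply (Hlub (Finite (tr d))). intros x [S [HS [Hl ->]]]. simpl. apply sum_le_trace; auto.
  - exfalso. apply (Hub 0). exists nil. repeat split; [constructor| simpl; lia].
Qed.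

Lemma top_le_trace d n : top d n <= tr d.
Proof. apply (proj2 (top_spec d n)). intros; apply sum_le_trace; auto. Qed.

Lemma top_nonneg d n : 0 <= top d n.
Proof.
  apply (proj1 (top_spec d n) nil); [constructor| simpl; lia].
Qed.

Lemma top_0 d : top d 0 = 0.
Proof.
  apply Rle_antisym; [|apply top_nonneg].
  apply (proj2 (top_spec d 0)). intros S _ Hl. destruct S; [simpl; unfold sumR; simpl; lra| simpl in Hl; lia].
Qed.

Lemma err_le_of d n e : 0 <= e -> tr d - top d n <= e ^ 2 -> er d n <= e.
Proof.
  intros He H. unfold err. rewrite <- (sqrt_pow2 e) by auto. apply sqrt_le_1_alt. auto.
Qed.

Lemma err_sq d n e : er d n <= e -> tr d - top d n <= e ^ 2.
Proof.
  intros H. unfold err in H. pose proof (top_le_trace d n).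
  pose proof (sqrt_sqrt (tr d - top d n) ltac:(lra)).
  pose proof (sqrt_pos (tr d - top d n)). nra.
Qed.

Lemma LB d n L v : NoDup L -> 0 <= v -> (forall x, In x L -> v <= ev d x) ->
  (INR (length L) - INR n) * v <= tr d - top d n.
Proof.
  intros HL Hv HLv. destruct (top_spec d n) as [_ H2].
  assert (top d n <= tr d - (INR (length L) - INR n) * v); [|lra].
  apply H2. intros S HS Hl.
  set (f := fun x => if in_dec idx_eq_dec x S then true else false).
  set (U := filter (fun x => negb (f x)) L).
  assert (HSU : NoDup (S ++ U)).
  { apply NoDup_app; auto. apply NoDup_filter; auto. intros a Ha HaU. unfold U in HaU.
    apply filter_In in HaU as [_ Hf]. unfold f in Hf.
    destruct (in_dec idx_eq_dec a S); simpl in Hf; congruence. }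
  pose proof (sum_le_trace d _ HSU) as Ht. rewrite map_app, sumR_app in Ht.
  assert (HU : INR (length U) * v <= sumR (map (ev d) U)).
  { apply sumR_ge_const. intros x Hx. unfold U in Hx; apply filter_In in Hx as [Hx _]; auto. }
  assert (Hlen : (length L <= length U + length S)%nat).
  { pose proof (filter_length f L) as E.
    assert (length (filter f L) <= length S)%nat.
    { apply NoDup_incl_length. apply NoDup_filter; auto. intros x Hx.
      apply filter_In in Hx as [_ Hf]. unfold f in Hf.
      destruct (in_dec idx_eq_dec x S); [auto| discriminate]. }
    unfold U. lia. }
  apply le_INR in Hlen. rewrite plus_INR in Hlen. apply le_INR in Hl.
  assert ((INR (length L) - INR n) * v <= INR (length U) * v) by (apply Rmult_le_compat_r; lra).
  lra.
Qed.

Definition c1 := sigma 1%nat / (sigma 1%nat - 1).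

Lemma c1_pos : 0 < c1.
Proof. unfold c1; apply Rdiv_lt_0_compat; lra. Qed.

Lemma zeta_tail_j j m : (1 <= j)%nat ->
  zeta (sigma j) - Pz (sigma j) m <= c1 * Rpower (INR (S m)) (1 - sigma 1%nat).
Proof.
  intros Hj. pose proof (sigma_ge j Hj) as Hs. pose proof (sigma_gt1 j Hj) as Hs1.
  destruct (zeta_facts (sigma j) Hs1) as [_ [_ [_ Ht]]].
  specialize (Ht m).
  assert (H1 : sigma j / (sigma j - 1) <= c1).
  { unfold c1. replace (sigma j / (sigma j - 1)) with (1 + / (sigma j - 1)) by (field; lra).
    replace (sigma 1%nat / (sigma 1%nat - 1)) with (1 + / (sigma 1%nat - 1)) by (field; lra).
    apply Rplus_le_compat_l. apply Rinv_le_contravar; lra. }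
  assert (H2 : Rpower (INR (S m)) (1 - sigma j) <= Rpower (INR (S m)) (1 - sigma 1%nat)).
  { apply Rle_Rpower; [|lra]. replace 1 with (INR 1) by reflexivity. apply le_INR; lia. }
  pose proof (Rpower_pos (INR (S m)) (1 - sigma j)).
  assert (0 < sigma j / (sigma j - 1)) by (apply Rdiv_lt_0_compat; lra).
  pose proof c1_pos.
  assert (sigma j / (sigma j - 1) * Rpower (INR (S m)) (1 - sigma j) <=
          c1 * Rpower (INR (S m)) (1 - sigma 1%nat)) by (apply Rmult_le_compat; lra).
  lra.
Qed.

Lemma sel_resid d m :
  tr d - top d (length (sel d m)) <=
  sumR (map (fun j => 2 * c1 * beta j * Rpower (INR (S (m j))) (1 - sigma 1%nat)) (seq 1 d)).
Proof.
  pose proof (proj1 (top_spec d _) (sel d m) (sel_NoDup d m) (le_n _)) as Ht.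
  rewrite sel_sum in Ht. rewrite trace_eq.
  assert (sumR (map (fun j => 2 * beta j * zeta (sigma j)) (seq 1 d)) <=
          sumR (map (fun j => 2 * beta j * Pz (sigma j) (m j)) (seq 1 d)) +
          sumR (map (fun j => 2 * c1 * beta j * Rpower (INR (S (m j))) (1 - sigma 1%nat)) (seq 1 d))).
  { rewrite <- sumR_plus. apply sumR_le. intros j Hj. apply in_seq in Hj.
    pose proof (zeta_tail_j j (m j) ltac:(lia)). pose proof (Hbeta_pos j ltac:(lia)). nra. }
  lra.
Qed.

Lemma choose_m A e s : 0 < A -> 0 < e -> 0 < s ->
  exists m : nat, A * Rpower (INR (S m)) (- s) <= e ^ 2 /\
                  INR m <= Rpower A (/ s) * Rpower e (- (2 * / s)).
Proof.
  intros HA He Hs.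
  set (Y := Rpower A (/ s) * Rpower e (- (2 * / s))).
  assert (HY : 0 < Y) by (unfold Y; apply Rmult_lt_0_compat; apply Rpower_pos).
  destruct (nfl_spec Y (Rlt_le _ _ HY)) as [H1 H2].
  exists (nfl Y). split; [|exact H1].
  assert (HYs : Rpower Y s = A * / e ^ 2).
  { unfold Y. rewrite <- Rpower_mult_distr by apply Rpower_pos.
    rewrite !Rpower_mult. replace (/ s * s) with 1 by (field; lra).
    replace (- (2 * / s) * s) with (Ropp 2) by (field; lra).
    rewrite Rpower_1 by auto. rewrite Rpower_Ropp, Rpower_sqr by auto. reflexivity. }
  assert (HX : Rpower Y s <= Rpower (INR (S (nfl Y))) s).
  { apply Rle_Rpower_l; [lra|]. rewrite S_INR. lra. }
  rewrite HYs in HX. rewrite Rpower_Ropp.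
  set (X := Rpower (INR (S (nfl Y))) s) in *.
  assert (HXp : 0 < X) by apply Rpower_pos.
  assert (He2 : 0 < e ^ 2) by (apply pow_lt; auto).
  apply (Rmult_le_reg_r X); auto.
  replace (A * / X * X) with A by (field; lra).
  apply (Rmult_le_compat_l (e ^ 2)) in HX; [|lra].
  replace (e ^ 2 * (A * / e ^ 2)) with A in HX by (field; lra). lra.
Qed.

Lemma pow_prod_ge1 a b c : 1 <= a -> 1 <= b -> 1 <= c -> 1 <= a * b * c.
Proof. intros; assert (1 <= a * b) by nra. nra. Qed.

Lemma PT_ABS : PT alpha beta sigma ABS.
Proof.
  set (s := sigma 1%nat - 1). assert (Hs : 0 < s) by (unfold s; lra).
  set (r := / s). assert (Hr : 0 < r) by (unfold r; apply Rinv_0_lt_compat; auto).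
  set (K := Rpower (2 * c1) r). assert (HK : 0 < K) by apply Rpower_pos.
  exists (1 + 2 * K), (2 * / s), (1 + r).
  split; [lra|]. split; [apply Rlt_le, Rmult_lt_0_compat; [lra| apply Rinv_0_lt_compat; auto]|].
  split; [lra|].
  intros d eps Hd Heps.
  assert (HdR : 1 <= INR d) by (replace 1 with (INR 1) by reflexivity; apply le_INR; auto).
  pose proof c1_pos as Hc.
  destruct (choose_m (2 * c1 * INR d) eps s ltac:(nra) ltac:(lra) Hs) as [m [Hm1 Hm2]].
  exists (length (sel d (fun _ => m))). split.
  - rewrite sel_len. rewrite sumR_const, length_seq.
    rewrite <- Rpower_mult_distr in Hm2 by lra. fold r in Hm2. fold K in Hm2.
    rewrite Rpower_plus, Rpower_1 by lra.
    set (D := Rpower (INR d) r) in *. change (2 * / s) with (2 * r) in *. set (Ep := Rpower eps (- (2 * r))) in *.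
    assert (HD : 1 <= D) by (apply Rpower_ge1; lra).
    assert (HE : 1 <= Ep) by (apply Rpower_eps_ge1; [lra| apply Rlt_le, Rmult_lt_0_compat; [lra| unfold r; apply Rinv_0_lt_compat; auto]]).
    pose proof (pow_prod_ge1 _ _ _ HdR HD HE).
    assert (INR d * INR m <= INR d * (K * D * Ep)) by (apply Rmult_le_compat_l; lra).
    nra.
  - simpl CRI. apply err_le_of; [lra|].
    eapply Rle_trans; [apply sel_resid|].
    eapply Rle_trans with (sumR (map (fun _ => 2 * c1 * Rpower (INR (S m)) (- s)) (seq 1 d))).
    + apply sumR_le. intros j Hj. apply in_seq in Hj.
      replace (1 - sigma 1%nat) with (- s) by (unfold s; ring).
      pose proof (beta_le1 j ltac:(lia)). pose proof (Hbeta_pos j ltac:(lia)).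
      pose proof (Rpower_pos (INR (S m)) (- s)).
      assert (0 < c1 * Rpower (INR (S m)) (- s)) by (apply Rmult_lt_0_compat; lra). nra.
    + rewrite sumR_const, length_seq. nra.
Qed.

Lemma sum_beta_trace d : 2 * sumR (map beta (seq 1 d)) <= tr d.
Proof.
  rewrite trace_eq. pose proof (sum1_alpha_nonneg d).
  rewrite <- sumR_scal.
  assert (sumR (map (fun x => 2 * beta x) (seq 1 d)) <=
          sumR (map (fun j => 2 * beta j * zeta (sigma j)) (seq 1 d))); [|lra].
  apply sumR_le. intros j Hj. apply in_seq in Hj.
  destruct (zeta_facts (sigma j) (sigma_gt1 j ltac:(lia))) as [_ [_ [H1 _]]].
  pose proof (Hbeta_pos j ltac:(lia)). nra.
Qed.

Lemma PT_NOR : PT alpha beta sigma NOR.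
Proof.
  set (s := sigma 1%nat - 1). assert (Hs : 0 < s) by (unfold s; lra).
  set (r := / s).
  set (K := Rpower c1 r). assert (HK : 0 < K) by apply Rpower_pos.
  exists (1 + 2 * K), (2 * / s), 1.
  split; [lra|]. split; [apply Rlt_le, Rmult_lt_0_compat; [lra| apply Rinv_0_lt_compat; auto]|].
  split; [lra|].
  intros d eps Hd Heps.
  assert (HdR : 1 <= INR d) by (replace 1 with (INR 1) by reflexivity; apply le_INR; auto).
  pose proof c1_pos as Hc.
  destruct (choose_m c1 eps s Hc ltac:(lra) Hs) as [m [Hm1 Hm2]].
  exists (length (sel d (fun _ => m))). split.
  - rewrite sel_len. rewrite sumR_const, length_seq. fold r K in Hm2.
    rewrite Rpower_1 by lra.
    change (2 * / s) with (2 * r) in *. set (Ep := Rpower eps (- (2 * r))) in *.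
    assert (HE : 1 <= Ep) by (apply Rpower_eps_ge1; [lra| apply Rlt_le, Rmult_lt_0_compat; [lra| unfold r; apply Rinv_0_lt_compat; auto]]).
    assert (INR d * INR m <= INR d * (K * Ep)) by (apply Rmult_le_compat_l; lra).
    nra.
  - simpl CRI. unfold err at 2. rewrite top_0, Rminus_0_r.
    pose proof (top_nonneg d 0). pose proof (top_le_trace d 0).
    assert (Htr : 0 <= tr d) by lra.
    apply err_le_of; [apply Rmult_le_pos; [lra| apply sqrt_pos]|].
    rewrite Rpow_mult_distr. rewrite pow2_sqrt by auto.
    eapply Rle_trans; [apply sel_resid|].
    replace (1 - sigma 1%nat) with (- s) by (unfold s; ring).
    rewrite (sumR_ext _ (fun j => (2 * (c1 * Rpower (INR (S m)) (- s))) * beta j)) by (intros; ring).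
    rewrite sumR_scal. pose proof (sum_beta_trace d).
    pose proof (sumR_nonneg beta (seq 1 d) ltac:(intros j Hj; apply in_seq in Hj; apply Rlt_le, Hbeta_pos; lia)).
    pose proof (Rpower_pos (INR (S m)) (- s)). nra.
Qed.

Lemma Rpower_Q eps K z : 0 < eps -> 0 < K ->
  Rpower (eps ^ 2 / K) z = Rpower eps (2 * z) * Rpower K (- z).
Proof.
  intros He HK. unfold Rdiv.
  rewrite <- Rpower_mult_distr by (try apply pow_lt; try apply Rinv_0_lt_compat; auto).
  rewrite <- Rpower_sqr, Rpower_mult by auto. rewrite Rpower_inv_base by auto. reflexivity.
Qed.

Lemma pointwise_thr b t tau : 0 < b -> 0 < t -> 0 < tau < 1 -> 1 <= tau * sigma 1%nat ->
  b * Rpower (INR (S (nfl (Rpower (b / t) tau)))) (1 - sigma 1%nat) <= t * Rpower (b / t) tau.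
Proof.
  intros Hb Ht Htau Hts.
  set (r := b / t). assert (Hr : 0 < r) by (unfold r; apply Rdiv_lt_0_compat; auto).
  assert (Hbr : b = t * r) by (unfold r; field; lra).
  destruct (nfl_spec (Rpower r tau) (Rlt_le _ _ (Rpower_pos _ _))) as [_ Hup].
  rewrite <- S_INR in Hup.
  set (X := INR (S (nfl (Rpower r tau)))) in *.
  destruct (Rle_or_lt 1 r) as [H1|H1].
  - assert (HR : 1 <= Rpower r tau) by (apply Rpower_ge1; lra).
    assert (E1 : Rpower X (1 - sigma 1%nat) <= Rpower (Rpower r tau) (1 - sigma 1%nat)).
    { replace (1 - sigma 1%nat) with (- (sigma 1%nat - 1)) by ring.
      apply Rpower_le_neg; lra. }
    rewrite Rpower_mult in E1.
    assert (E2 : r * Rpower r (tau * (1 - sigma 1%nat)) <= Rpower r tau).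
    { rewrite <- (Rpower_1 r) at 1 by auto. rewrite <- Rpower_plus.
      apply Rle_Rpower; auto. nra. }
    rewrite Hbr.
    pose proof (Rpower_pos X (1 - sigma 1%nat)).
    assert (t * r * Rpower X (1 - sigma 1%nat) <= t * r * Rpower r (tau * (1 - sigma 1%nat))).
    { apply Rmult_le_compat_l; [nra| lra]. }
    assert (t * (r * Rpower r (tau * (1 - sigma 1%nat))) <= t * Rpower r tau) by (apply Rmult_le_compat_l; lra).
    nra.
  - assert (HX1 : 1 <= X) by (unfold X; rewrite S_INR; pose proof (pos_INR (nfl (Rpower r tau))); lra).
    assert (E1 : Rpower X (1 - sigma 1%nat) <= 1).
    { apply Rle_trans with (Rpower X 0); [apply Rle_Rpower; lra| rewrite Rpower_O; lra]. }
    assert (E2 : r <= Rpower r tau).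
    { rewrite <- (Rpower_1 r) at 1 by auto. apply Rpower_small_base; lra. }
    pose proof (Rpower_pos X (1 - sigma 1%nat)).
    assert (b * Rpower X (1 - sigma 1%nat) <= b) by nra.
    rewrite Hbr in *. nra.
Qed.

Lemma thr p B d eps : 0 < p -> 2 / (sigma 1%nat - 1) <= p -> 0 < B -> (1 <= d)%nat ->
  sumR (map (fun j => Rpower (beta j) (p / (p + 2))) (seq 1 d)) <= B -> 0 < eps < 1 ->
  info_le alpha beta sigma ABS d eps ((1 + 2 * B * Rpower (2 * c1 * B) (p / 2)) * Rpower eps (- p)).
Proof.
  intros Hp Hsp HB Hd HsB Heps.
  set (tau := p / (p + 2)) in *.
  assert (Htau : 0 < tau < 1).
  { unfold tau; split; [apply Rdiv_lt_0_compat; lra|].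
    apply (Rmult_lt_reg_r (p + 2)); [lra|]. unfold Rdiv; rewrite Rmult_assoc, Rinv_l by lra. lra. }
  assert (Hts : 1 <= tau * sigma 1%nat).
  { assert (2 <= p * (sigma 1%nat - 1)).
    { apply (Rmult_le_compat_r (sigma 1%nat - 1)) in Hsp; [|lra].
      unfold Rdiv in Hsp; rewrite Rmult_assoc, Rinv_l in Hsp by lra. lra. }
    unfold tau. apply (Rmult_le_reg_r (p + 2)); [lra|].
    replace (p / (p + 2) * sigma 1%nat * (p + 2)) with (p * sigma 1%nat) by (field; lra). lra. }
  pose proof c1_pos as Hc.
  set (Q := eps ^ 2 / (2 * c1 * B)).
  assert (HQ : 0 < Q) by (unfold Q; apply Rdiv_lt_0_compat; [apply pow_lt; lra| nra]).
  set (t := Rpower Q ((p + 2) / 2)).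
  assert (Ht : 0 < t) by apply Rpower_pos.
  set (m := fun j => nfl (Rpower (beta j / t) tau)).
  assert (Hsplit : forall j, (1 <= j)%nat -> Rpower (beta j / t) tau = Rpower (beta j) tau * Rpower t (- tau)).
  { intros j Hj. unfold Rdiv. rewrite <- Rpower_mult_distr by (try apply Hbeta_pos; try apply Rinv_0_lt_compat; auto).
    rewrite Rpower_inv_base by auto. reflexivity. }
  set (T := Rpower t (- tau)).
  assert (HT : T = Rpower eps (- p) * Rpower (2 * c1 * B) (p / 2)).
  { unfold T, t. rewrite Rpower_mult. unfold Q. rewrite Rpower_Q by (lra || nra).
    f_equal; f_equal; unfold tau; field; lra. }
  assert (HtT : t * T = Q).
  { unfold T. rewrite <- (Rpower_1 t) at 1 by auto. rewrite <- Rpower_plus.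
    unfold t. rewrite Rpower_mult. replace ((p + 2) / 2 * (1 + - tau)) with 1 by (unfold tau; field; lra).
    apply Rpower_1; auto. }
  set (SB := sumR (map (fun j => Rpower (beta j) tau) (seq 1 d))) in *.
  assert (HSB0 : 0 <= SB) by (apply sumR_nonneg; intros; apply Rlt_le, Rpower_pos).
  assert (HTp : 0 < T) by apply Rpower_pos.
  exists (length (sel d m)). split.
  - rewrite sel_len.
    assert (sumR (map (fun j => INR (m j)) (seq 1 d)) <= T * SB).
    { unfold SB. rewrite <- sumR_scal. apply sumR_le. intros j Hj. apply in_seq in Hj.
      unfold m. destruct (nfl_spec (Rpower (beta j / t) tau) (Rlt_le _ _ (Rpower_pos _ _))) as [H1 _].
      rewrite Hsplit in H1 |- * by lia. fold T in H1 |- *. lra. }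
    assert (T * SB <= T * B) by (apply Rmult_le_compat_l; lra).
    assert (HE : 1 <= Rpower eps (- p)) by (apply Rpower_eps_ge1; lra).
    rewrite HT in *.
    pose proof (Rpower_pos (2 * c1 * B) (p / 2)).
    nra.
  - simpl CRI. apply err_le_of; [lra|].
    eapply Rle_trans; [apply sel_resid|].
    apply Rle_trans with (sumR (map (fun j => 2 * c1 * (t * T) * Rpower (beta j) tau) (seq 1 d))).
    + apply sumR_le. intros j Hj. apply in_seq in Hj.
      pose proof (pointwise_thr (beta j) t tau (Hbeta_pos j ltac:(lia)) Ht Htau Hts) as P.
      rewrite Hsplit in P by lia. unfold m.
      replace (2 * c1 * (t * T) * Rpower (beta j) tau) with (2 * c1 * (t * (Rpower (beta j) tau * T))) by ring.
      rewrite <- Hsplit by lia.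
      replace (2 * c1 * beta j * Rpower (INR (S (nfl (Rpower (beta j / t) tau)))) (1 - sigma 1%nat))
        with (2 * c1 * (beta j * Rpower (INR (S (nfl (Rpower (beta j / t) tau)))) (1 - sigma 1%nat))) by ring.
      rewrite Hsplit by lia.
      apply Rmult_le_compat_l; [lra|]. rewrite <- Hsplit by lia. rewrite <- Hsplit in P by lia. exact P.
    + rewrite sumR_scal. fold SB. rewrite HtT.
      assert (2 * c1 * Q * SB <= 2 * c1 * Q * B) by (apply Rmult_le_compat_l; nra).
      replace (2 * c1 * Q * B) with ((eps * 1) ^ 2) in H by (unfold Q; field; nra).
      lra.
Qed.

Lemma LB_dim d n : (1 <= d)%nat -> (INR d - INR n) * beta d <= tr d - top d n.
Proof.
  intros Hd.
  set (L := map (fun j => Some (j, 1%nat, true)) (seq 1 d)).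
  pose proof (LB d n L (beta d)) as H.
  assert (HlL : length L = d) by (unfold L; rewrite length_map, length_seq; reflexivity).
  rewrite <- HlL at 1. apply H.
  - unfold L. apply NoDup_map_NoDup_ForallPairs; [|apply seq_NoDup].
    intros x y _ _ E; injection E; auto.
  - apply Rlt_le, Hbeta_pos; auto.
  - intros x Hx. unfold L in Hx. apply in_map_iff in Hx as [j [<- Hj]]. apply in_seq in Hj.
    rewrite ev_some by lia. simpl INR. rewrite Rpower_1_base, Rmult_1_r.
    apply beta_ge; lia.
Qed.

Lemma LB_sig n : (INR n + 1) * (beta 1%nat * Rpower (INR (2 * n + 1)) (- sigma 1%nat)) <= tr 1 - top 1 n.
Proof.
  set (L := map (fun k => Some (1%nat, k, true)) (seq 1 (2 * n + 1))).
  pose proof (LB 1 n L (beta 1%nat * Rpower (INR (2 * n + 1)) (- sigma 1%nat))) as H.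
  assert (HlL : length L = (2 * n + 1)%nat) by (unfold L; rewrite length_map, length_seq; reflexivity).
  replace (INR n + 1) with (INR (length L) - INR n) by (rewrite HlL, plus_INR, mult_INR; simpl; ring).
  apply H.
  - unfold L. apply NoDup_map_NoDup_ForallPairs; [|apply seq_NoDup].
    intros x y _ _ E; injection E; auto.
  - apply Rlt_le, Rmult_lt_0_compat; [apply Hbeta_pos; auto| apply Rpower_pos].
  - intros x Hx. unfold L in Hx. apply in_map_iff in Hx as [k [<- Hk]]. apply in_seq in Hk.
    rewrite ev_some by lia. apply Rmult_le_compat_l; [apply Rlt_le, Hbeta_pos; auto|].
    apply Rpower_le_neg; [|lra]. split.
    + apply lt_0_INR; lia.
    + apply le_INR; lia.
Qed.

Lemma sig_lb p : 0 <= p -> SPT_with alpha beta sigma ABS p -> 2 / (sigma 1%nat - 1) <= p.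
Proof.
  intros Hp [C [HC Hb]].
  destruct (Rle_or_lt (2 / (sigma 1%nat - 1)) p) as [H|H]; [exact H| exfalso].
  set (s := sigma 1%nat - 1) in *. assert (Hs : 0 < s) by (unfold s; lra).
  set (delta := 2 - p * s).
  assert (Hdelta : 0 < delta).
  { unfold delta. apply (Rmult_lt_compat_r s) in H; auto.
    unfold Rdiv in H; rewrite Rmult_assoc, Rinv_l in H by lra. lra. }
  pose proof (Hbeta_pos 1%nat (le_n 1)) as Hb1.
  set (K := beta 1%nat * Rpower 2 (- sigma 1%nat) * Rpower (C + 1) (- s)).
  assert (HK : 0 < K) by (unfold K; repeat apply Rmult_lt_0_compat; auto; apply Rpower_pos).
  set (b0 := Rmin (K / 2) (1 / 2)).
  assert (Hb0 : 0 < b0 < 1) by (unfold b0; split; [apply Rmin_glb_lt; lra| pose proof (Rmin_r (K/2) (1/2)); lra]).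
  set (eps := Rpower b0 (/ delta)).
  assert (Hid : 0 < / delta) by (apply Rinv_0_lt_compat; auto).
  assert (Heps : 0 < eps < 1).
  { split; [apply Rpower_pos|]. unfold eps. rewrite <- (Rpower_1_base (/ delta)).
    apply Rlt_Rpower_l; lra. }
  assert (Hed : Rpower eps delta < K).
  { unfold eps. rewrite Rpower_mult. replace (/ delta * delta) with 1 by (field; lra).
    rewrite Rpower_1 by lra. pose proof (Rmin_l (K/2) (1/2)). fold b0 in H0. lra. }
  destruct (Hb 1%nat eps (le_n 1) Heps) as [n [Hn Herr]].
  simpl CRI in Herr. apply err_sq in Herr.
  pose proof (LB_sig n) as HL.
  set (N1 := INR n + 1) in *.
  assert (HN1 : 1 <= N1) by (unfold N1; pose proof (pos_INR n); lra).
  assert (E1 : Rpower 2 (- sigma 1%nat) * Rpower N1 (- sigma 1%nat) <= Rpower (INR (2 * n + 1)) (- sigma 1%nat)).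
  { rewrite Rpower_mult_distr by lra. apply Rpower_le_neg; [|lra]. split; [apply lt_0_INR; lia|].
    unfold N1; rewrite plus_INR, mult_INR; simpl; lra. }
  assert (E2 : N1 * Rpower N1 (- sigma 1%nat) = Rpower N1 (- s)).
  { rewrite <- (Rpower_1 N1) at 1 by lra. rewrite <- Rpower_plus. f_equal. unfold s; ring. }
  assert (HEp : 1 <= Rpower eps (- p)) by (apply Rpower_eps_ge1; lra).
  assert (HN1b : N1 <= (C + 1) * Rpower eps (- p)) by (unfold N1; nra).
  assert (E3 : Rpower ((C + 1) * Rpower eps (- p)) (- s) <= Rpower N1 (- s)).
  { apply Rpower_le_neg; lra. }
  rewrite <- Rpower_mult_distr, Rpower_mult in E3 by (try apply Rpower_pos; lra).
  replace (- p * - s) with (p * s) in E3 by ring.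
  assert (E4 : K * Rpower eps (p * s) <= eps ^ 2).
  { unfold K.
    assert (beta 1%nat * Rpower 2 (- sigma 1%nat) * Rpower N1 (- s) <= eps ^ 2).
    { rewrite <- E2.
      assert (0 < Rpower 2 (- sigma 1%nat)) by apply Rpower_pos.
      assert (0 < Rpower N1 (- sigma 1%nat)) by apply Rpower_pos.
      assert (N1 * (beta 1%nat * (Rpower 2 (- sigma 1%nat) * Rpower N1 (- sigma 1%nat))) <=
              N1 * (beta 1%nat * Rpower (INR (2 * n + 1)) (- sigma 1%nat))).
      { apply Rmult_le_compat_l; [lra|]. apply Rmult_le_compat_l; lra. }
      replace ((eps * 1) ^ 2) with (eps ^ 2) in Herr by ring. nra. }
    assert (0 < beta 1%nat * Rpower 2 (- sigma 1%nat)) by (apply Rmult_lt_0_compat; auto; apply Rpower_pos).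
    assert (beta 1%nat * Rpower 2 (- sigma 1%nat) * (Rpower (C + 1) (- s) * Rpower eps (p * s)) <=
            beta 1%nat * Rpower 2 (- sigma 1%nat) * Rpower N1 (- s)) by (apply Rmult_le_compat_l; lra).
    nra. }
  rewrite <- Rpower_sqr in E4 by lra.
  assert (E5 : Rpower eps 2 = Rpower eps delta * Rpower eps (p * s))
    by (rewrite <- Rpower_plus; f_equal; unfold delta; ring).
  rewrite E5 in E4.
  assert (0 < Rpower eps (p * s)) by apply Rpower_pos.
  assert (K <= Rpower eps delta).
  { apply (Rmult_le_reg_r (Rpower eps (p * s))); auto. }
  lra.
Qed.

Lemma ln_pos_nat d : (2 <= d)%nat -> 0 < ln (INR d).
Proof.
  intros Hd. rewrite <- ln_1. apply ln_increasing; [lra|].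
  replace 1 with (INR 1) by reflexivity. apply lt_INR; lia.
Qed.

Lemma A_lb p : 0 < p -> SPT_with alpha beta sigma ABS p -> Rbar_le (1 + 2 / p) (A_star beta).
Proof.
  intros Hp [C [HC Hb]].
  set (C' := C + 1). assert (HC' : 0 < C') by (unfold C'; lra).
  set (l := 1 + 2 / p).
  set (K := ln 2 + 2 / p * ln (2 * C')).
  assert (Key : forall d, (2 <= d)%nat -> 2 * C' < INR d ->
            l * ln (INR d) - K <= ln (1 / beta d)).
  { intros d Hd2 HdC.
    assert (Hd1 : (1 <= d)%nat) by lia.
    assert (HdR : 0 < INR d) by lra.
    set (b0 := 2 * C' / INR d).
    assert (Hb0 : 0 < b0 < 1).
    { unfold b0; split; [apply Rdiv_lt_0_compat; lra|].
      apply (Rmult_lt_reg_r (INR d)); auto. unfold Rdiv; rewrite Rmult_assoc, Rinv_l by lra. lra. }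
    set (eps := Rpower b0 (/ p)).
    assert (Hip : 0 < / p) by (apply Rinv_0_lt_compat; auto).
    assert (Heps : 0 < eps < 1).
    { split; [apply Rpower_pos|]. unfold eps. rewrite <- (Rpower_1_base (/ p)).
      apply Rlt_Rpower_l; lra. }
    destruct (Hb d eps Hd1 Heps) as [n [Hn Herr]].
    simpl CRI in Herr. apply err_sq in Herr.
    pose proof (LB_dim d n Hd1) as HL.
    assert (Hepm : Rpower eps (- p) = INR d / (2 * C')).
    { unfold eps. rewrite Rpower_mult. replace (/ p * - p) with (Ropp 1) by (field; lra).
      rewrite Rpower_Ropp, Rpower_1 by lra. unfold b0. field; lra. }
    rewrite Hepm in Hn.
    assert (Hn2 : INR n <= INR d / 2).
    { assert (C / (2 * C') <= / 2).
      { apply (Rmult_le_reg_r (2 * C')); [lra|]. unfold Rdiv. rewrite Rmult_assoc, Rinv_l by lra.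
        unfold C'; lra. }
      replace (C * (INR d / (2 * C'))) with (INR d * (C / (2 * C'))) in Hn by (field; lra).
      unfold Rdiv at 1. nra. }
    assert (Hep2 : (eps * 1) ^ 2 = Rpower b0 (2 / p)).
    { rewrite Rmult_1_r, <- Rpower_sqr by lra. unfold eps. rewrite Rpower_mult. f_equal. field; lra. }
    rewrite Hep2 in Herr.
    pose proof (Hbeta_pos d Hd1) as Hbd.
    assert (Hbb : beta d * INR d <= 2 * Rpower b0 (2 / p)) by nra.
    apply ln_le in Hbb; [|apply Rmult_lt_0_compat; lra].
    rewrite ln_mult in Hbb by lra. rewrite ln_mult in Hbb by (try lra; apply Rpower_pos).
    rewrite ln_Rpower in Hbb. unfold b0 in Hbb. unfold Rdiv in Hbb at 2.
    rewrite ln_mult in Hbb by (try lra; apply Rinv_0_lt_compat; lra).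
    rewrite ln_Rinv in Hbb by lra.
    unfold Rdiv at 1. rewrite Rmult_1_l, ln_Rinv by auto.
    unfold l, K. unfold Rdiv in *. nra. }
  assert (Hev : forall e, 0 < e -> Rbar_le (l - e) (A_star beta)).
  { intros e He.
    destruct (nat_large (2 * C' + 1)) as [N1 HN1].
    destruct (nat_large (exp (Rabs K / e))) as [N2 HN2].
    unfold A_star. rewrite <- (LimInf_seq_const (l - e)).
    apply LimInf_le. exists (max 2 (max N1 N2)). intros d Hd.
    assert (Hd2 : (2 <= d)%nat) by lia.
    assert (HdN1 : INR N1 <= INR d) by (apply le_INR; lia).
    assert (HdN2 : INR N2 <= INR d) by (apply le_INR; lia).
    pose proof (ln_pos_nat d Hd2) as Hln.
    assert (Hlnd : Rabs K / e <= ln (INR d)).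
    { rewrite <- (ln_exp (Rabs K / e)). apply ln_le; [apply exp_pos| lra]. }
    pose proof (Key d Hd2 ltac:(lra)) as Kd.
    assert (K <= e * ln (INR d)).
    { pose proof (Rle_abs K).
      apply (Rmult_le_compat_l e) in Hlnd; [|lra].
      replace (e * (Rabs K / e)) with (Rabs K) in Hlnd by (field; lra). lra. }
    apply (Rmult_le_reg_r (ln (INR d))); auto.
    unfold Rdiv. rewrite Rmult_assoc, Rinv_l by lra. nra. }
  destruct (A_star beta) as [a| |] eqn:EA; simpl.
  - destruct (Rle_or_lt l a) as [H|H]; [exact H|].
    specialize (Hev ((l - a) / 2) ltac:(lra)). simpl in Hev. lra.
  - exact I.
  - specialize (Hev 1 ltac:(lra)). simpl in Hev. exact Hev.
Qed.

Lemma A_up p : Rbar_lt 1 (A_star beta) ->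
  Rmax (two_over (A_star beta)) (2 / (sigma 1%nat - 1)) < p ->
  SPT_with alpha beta sigma ABS p.
Proof.
  intros HA Hp.
  pose proof (Rle_lt_trans _ _ _ (Rmax_l _ _) Hp) as Hp1.
  pose proof (Rle_lt_trans _ _ _ (Rmax_r _ _) Hp) as Hp2.
  assert (Hs2 : 0 < 2 / (sigma 1%nat - 1)) by (apply Rdiv_lt_0_compat; lra).
  assert (Hp0 : 0 < p) by lra.
  set (u := fun d => ln (1 / beta d) / ln (INR d)).
  assert (HA' : exists A' N, 1 + 2 / p < A' /\ forall n, (N <= n)%nat -> A' < u n).
  { destruct (ex_LimInf_seq u) as [l Hl].
    assert (EA : A_star beta = l) by (apply is_LimInf_seq_unique; exact Hl).
    rewrite EA in HA, Hp1. destruct l as [a| |]; simpl in HA, Hp1.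
    - assert (H2 : 1 + 2 / p < a).
      { assert (2 < p * (a - 1)).
        { apply (Rmult_lt_compat_r (a - 1)) in Hp1; [|lra].
          unfold Rdiv in Hp1; rewrite Rmult_assoc, Rinv_l in Hp1 by lra. lra. }
        assert (2 / p < a - 1); [|lra].
        apply (Rmult_lt_reg_r p); auto. unfold Rdiv; rewrite Rmult_assoc, Rinv_l by lra. lra. }
      set (A' := (1 + 2 / p + a) / 2).
      assert (Hpos : 0 < a - A') by (unfold A'; lra).
      destruct (Hl (mkposreal _ Hpos)) as [_ [N HN]].
      exists A', N. split; [unfold A'; lra|]. intros n Hn. specialize (HN n Hn). simpl in HN. lra.
    - destruct (Hl (2 + 2 / p)) as [N HN]. exists (2 + 2 / p), N. split; [lra| exact HN].
    - contradiction. }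
  destruct HA' as [A' [N [HA'1 HN]]].
  set (tau := p / (p + 2)).
  set (s := tau * A').
  assert (Hs : 1 < s).
  { unfold s, tau. replace (p / (p + 2) * A') with (p * A' / (p + 2)) by (field; lra).
    apply (Rmult_lt_reg_r (p + 2)); [lra|]. unfold Rdiv; rewrite Rmult_assoc, Rinv_l by lra.
    assert (p * (1 + 2 / p) = p + 2) by (field; lra). nra. }
  assert (Htau : 0 < tau) by (unfold tau; apply Rdiv_lt_0_compat; lra).
  set (N0 := max N 2).
  set (W := Rpower (INR N0) s).
  assert (HN0 : 2 <= INR N0) by (replace 2 with (INR 2) by (simpl; ring); apply le_INR; unfold N0; lia).
  assert (HW : 1 <= W) by (apply Rpower_ge1; lra).
  set (B := W * (s / (s - 1))).
  assert (HB : 0 < B) by (unfold B; apply Rmult_lt_0_compat; [lra| apply Rdiv_lt_0_compat; lra]).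
  assert (HsumB : forall d, sumR (map (fun j => Rpower (beta j) tau) (seq 1 d)) <= B).
  { intros d. apply Rle_trans with (sumR (map (fun j => W * Rpower (INR j) (- s)) (seq 1 d))).
    - apply sumR_le. intros j Hj. apply in_seq in Hj.
      pose proof (Hbeta_pos j ltac:(lia)) as Hbj.
      assert (HjR : 1 <= INR j) by (replace 1 with (INR 1) by reflexivity; apply le_INR; lia).
      destruct (le_lt_dec N0 j) as [Hj0|Hj0].
      + assert (Hj2 : (2 <= j)%nat) by (unfold N0 in Hj0; lia).
        pose proof (ln_pos_nat j Hj2) as Hln.
        specialize (HN j ltac:(unfold N0 in Hj0; lia)). unfold u in HN.
        assert (A' * ln (INR j) < ln (1 / beta j)).
        { apply (Rmult_lt_compat_r (ln (INR j))) in HN; auto.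
          unfold Rdiv in HN at 1. rewrite Rmult_assoc, Rinv_l in HN by lra. lra. }
        unfold Rdiv in H. rewrite Rmult_1_l, ln_Rinv in H by auto.
        assert (Rpower (beta j) tau <= Rpower (INR j) (- s)).
        { unfold Rpower. apply exp_le_mono. unfold s. nra. }
        pose proof (Rpower_pos (INR j) (- s)). nra.
      + assert (Rpower (beta j) tau <= 1).
        { rewrite <- (Rpower_1_base tau). apply Rle_Rpower_l; [lra|]. split; auto. apply beta_le1; lia. }
        assert (1 <= W * Rpower (INR j) (- s)).
        { unfold W. rewrite Rpower_Ropp.
          assert (Rpower (INR j) s <= Rpower (INR N0) s) by (apply Rle_Rpower_l; [lra| split; [lra| apply le_INR; lia]]).
          pose proof (Rpower_pos (INR j) s).
          apply (Rmult_le_reg_r (Rpower (INR j) s)); auto.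
          rewrite Rmult_assoc, Rinv_l by lra. lra. }
        lra.
    - rewrite sumR_scal. fold (Pz s d). unfold B.
      apply Rmult_le_compat_l; [lra| apply Pz_bound; auto]. }
  exists (1 + 2 * B * Rpower (2 * c1 * B) (p / 2)). split.
  { pose proof (Rpower_pos (2 * c1 * B) (p / 2)). nra. }
  intros d eps Hd Heps. apply thr; auto; lra.
Qed.

Lemma main_sec :
  (PT alpha beta sigma ABS /\ PT alpha beta sigma NOR) /\
  (SPT alpha beta sigma ABS <-> Rbar_lt 1 (A_star beta)) /\
  (Rbar_lt 1 (A_star beta) ->
     is_SPT_exponent alpha beta sigma ABS
       (Rmax (two_over (A_star beta)) (2 / (sigma 1%nat - 1)))).
Proof.
  assert (Hs2 : 0 < 2 / (sigma 1%nat - 1)) by (apply Rdiv_lt_0_compat; lra).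
  split; [split; [apply PT_ABS| apply PT_NOR]|].
  split; [split|].
  - intros [p [Hp0 Hsp]].
    pose proof (sig_lb p Hp0 Hsp). assert (Hp : 0 < p) by lra.
    pose proof (A_lb p Hp Hsp) as HA.
    assert (0 < 2 / p) by (apply Rdiv_lt_0_compat; lra).
    destruct (A_star beta); simpl in *; auto; lra.
  - intros HA. set (ps := Rmax (two_over (A_star beta)) (2 / (sigma 1%nat - 1))).
    pose proof (Rmax_r (two_over (A_star beta)) (2 / (sigma 1%nat - 1))).
    exists (ps + 1). split; [unfold ps in *; lra|]. apply A_up; auto. unfold ps; lra.
  - intros HA. split.
    + intros p Hp0 Hsp. pose proof (sig_lb p Hp0 Hsp). assert (Hp : 0 < p) by lra.
      pose proof (A_lb p Hp Hsp) as HAl.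
      apply Rmax_lub; auto.
      destruct (A_star beta) as [a| |]; simpl in *; try lra; try contradiction.
      assert (0 < 2 / p) by (apply Rdiv_lt_0_compat; lra).
      apply (Rmult_le_reg_r (a - 1)); [lra|]. unfold Rdiv. rewrite Rmult_assoc, Rinv_l by lra.
      assert (p * (1 + 2 / p) = p + 2) by (field; lra). nra.
    + intros x Hx. set (ps := Rmax (two_over (A_star beta)) (2 / (sigma 1%nat - 1))) in *.
      pose proof (Rmax_r (two_over (A_star beta)) (2 / (sigma 1%nat - 1))).
      exists ((ps + x) / 2). split; [unfold ps in *; lra|]. split; [|lra].
      apply A_up; auto. fold ps. lra.
Qed.

End Main.

Theorem theorem2p1 (alpha beta sigma : nat -> R)
  (Halpha : forall j, (1 <= j)%nat -> 0 <= alpha j)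
  (Hbeta1 : beta 1%nat <= 1)
  (Hbeta_mono : forall j, (1 <= j)%nat -> beta (S j) <= beta j)
  (Hbeta_pos : forall j, (1 <= j)%nat -> 0 < beta j)
  (Hsigma1 : 1 < sigma 1%nat)
  (Hsigma_mono : forall j, (1 <= j)%nat -> sigma j <= sigma (S j)) :
  (PT alpha beta sigma ABS /\ PT alpha beta sigma NOR) /\
  (SPT alpha beta sigma ABS <-> Rbar_lt 1 (A_star beta)) /\
  (Rbar_lt 1 (A_star beta) ->
     is_SPT_exponent alpha beta sigma ABS
       (Rmax (two_over (A_star beta)) (2 / (sigma 1%nat - 1)))).
Proof.
  exact (main_sec alpha beta sigma Halpha Hbeta1 Hbeta_mono Hbeta_pos Hsigma1 Hsigma_mono).
Qed.
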